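(* Let $\mathbf{k}$ be a commutative ring, $n\ge0$, $\mathcal{A}=\mathbf{k}[S_n]$. Fix $\alpha,\beta\in\operatorname{Comp}_n$ and let $\eta_\beta(\alpha)$ be the number of functions $f:[\ell(\beta)]\to[\ell(\alpha)]$ such that for every $j\in[\ell(\alpha)]$ one has $\alpha_j=\sum_{i\in f^{-1}(j)}\beta_i$. Let $Q_\beta:=\sum_{\alpha'\in\operatorname{Comp}_n,\ \alpha'\prec\beta}\mathcal{R}_{\alpha'}$. Then left multiplication by $\mathbf{B}_\alpha$ acts on the quotient $\mathcal{R}_\beta/Q_\beta$ as multiplication by the scalar $\eta_\beta(\alpha)$.
   Context: $S_n$ is the symmetric group on $[n]=\{1,\dots,n\}$, with product $(uw)(i)=u(w(i))$. For $w\in S_n$, $\operatorname{Des}(w)=\{i\in[n-1]: w(i)>w(i+1)\}$. For $I\subseteq[n-1]$, $\mathbf{B}_I=\sum_{w\in S_n,\ \operatorname{Des}(w)\subseteq I} w\in\mathcal{A}$. A composition $\alpha=(\alpha_1,\dots,\alpha_p)$ of $n$ is a finite sequence of positive integers with sum $n$; its length is $\ell(\alpha)=p$; $\operatorname{Comp}_n$ is the set of these. $\operatorname{Set}(\alpha)=\{\alpha_1,\alpha_1+\alpha_2,\dots,\alpha_1+\cdots+\alpha_{p-1}\}$ and $\mathbf{B}_\alpha:=\mathbf{B}_{\operatorname{Set}(\alpha)}$. For compositions $\alpha=(\alpha_1,\dots,\alpha_m)$, $\beta=(\beta_1,\dots,\beta_p)$ of $n$, $\alpha\preceq\beta$ means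 $\alpha$ can be split into $p$ contiguous subsequences whose $j$-th one sums to $\beta_j$; $\alpha\prec\beta$ means $\alpha\preceq\beta$ and $\alpha\ne\beta$. $\mathcal{R}_\beta:=\mathbf{B}_\beta\mathcal{A}$. *)

(* Defs.v *)
From HB Require Import structures.
From mathcomp Require Import all_boot all_order fingroup perm all_algebra.
Set Implicit Arguments. Unset Strict Implicit. Unset Printing Implicit Defensive.
Import GRing.Theory.
Local Open Scope ring_scope.

(* The group algebra k[S_n]: finitely supported functions S_n -> k,
   i.e. elements  \sum_w f(w) w. *)
Definition alg (k : comPzRingType) (n : nat) := {ffun 'S_n -> k}.

(* Paper convention: (u w)(i) = u (w i).  In MathComp, (s * t)%g x = t (s x),
   so the paper's product u w is the MathComp permutation (w * u)%g. *)
Definition pmul n (u w : 'S_n) : 'S_n := (w * u)%g.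

Definition gaZero (k : comPzRingType) n : alg k n := [ffun _ => 0].
Definition gaAdd (k : comPzRingType) n (f g : alg k n) : alg k n :=
  [ffun x => f x + g x].
Definition gaSub (k : comPzRingType) n (f g : alg k n) : alg k n :=
  [ffun x => f x - g x].
Definition gaScale (k : comPzRingType) n (c : k) (f : alg k n) : alg k n :=
  [ffun x => c * f x].
Definition gaMul (k : comPzRingType) n (f g : alg k n) : alg k n :=
  [ffun x => \sum_(u : 'S_n) \sum_(w : 'S_n)
                if pmul u w == x then f u * g w else 0].

(* Des(w) = { i in [n-1] : w(i) > w(i+1) }, positions 1-indexed;
   a 0-indexed ordinal j : 'I_n stores position j+1's value at w j. *)
Definition desb n (w : 'S_n) (i : nat) : bool :=
  [exists j : 'I_n, exists j' : 'I_n,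
     [&& val j == i.-1, val j' == i, 0 < i & val (w j') < val (w j)]%N].

Definition is_comp (n : nat) (a : seq nat) : bool :=
  all (fun x => 0 < x)%N a && (sumn a == n).

Definition compSet (a : seq nat) : seq nat :=
  [seq sumn (take m a) | m <- iota 1 (size a).-1].

Definition Bset (k : comPzRingType) n (s : seq nat) : alg k n :=
  [ffun w => if [forall j : 'I_n, desb w j ==> (val j \in s)] then 1 else 0].

Definition Bcomp (k : comPzRingType) n (a : seq nat) : alg k n :=
  Bset k n (compSet a).

Definition refines (a b : seq nat) : Prop :=
  exists ss : seq (seq nat),
    [/\ flatten ss = a, size ss = size b & map sumn ss = b].

Definition srefines (a b : seq nat) : Prop := refines a b /\ a <> b.

Definition eta (a b : seq nat) : nat :=
  #|[set f : {ffun 'I_(size b) -> 'I_(size a)} |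
      [forall j : 'I_(size a),
         nth 0%N a j == (\sum_(i : 'I_(size b) | f i == j) nth 0%N b i)%N]]|.

(* Q_beta = sum over compositions alpha' < beta of the right ideals
   R_alpha' = B_alpha' A; membership = being a finite sum of elements
   B_alpha' * x with alpha' a composition of n strictly refining beta. *)
Definition inQ (k : comPzRingType) n (b : seq nat) (x : alg k n) : Prop :=
  exists s : seq (seq nat * alg k n),
    (forall p, p \in s -> is_comp n p.1 /\ srefines p.1 b) /\
    x = foldr (fun p acc => gaAdd (gaMul (Bcomp k n p.1) p.2) acc) (gaZero k n) s.

(* Main.v *)
Require Import Defs.
From mathcomp Require Import all_boot all_order fingroup perm all_algebra.
From mathcomp Require Import zify.
Set Implicit Arguments. Unset Strict Implicit. Unset Printing Implicit Defensive.
Open Scope nat_scope.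

Lemma sum_split3 (F : nat -> nat) n p : p < n ->
  \sum_(0 <= i < n) F i = \sum_(0 <= i < p) F i + F p + \sum_(p.+1 <= i < n) F i.
Proof.
move=> hp; rewrite (big_cat_nat (leq0n p) (ltnW hp)) /=.
by rewrite (big_cat_nat (leqnSn p) hp) big_nat1 addnA.
Qed.

Lemma sum_lt_pt (F G : nat -> nat) n p : p < n ->
  (forall i, i < n -> F i <= G i) -> F p < G p ->
  \sum_(0 <= i < n) F i < \sum_(0 <= i < n) G i.
Proof.
move=> hp hle hlt; rewrite (sum_split3 F hp) (sum_split3 G hp).
have h1 : \sum_(0 <= i < p) F i <= \sum_(0 <= i < p) G i.
  rewrite big_nat_cond [X in _ <= X]big_nat_cond; apply: leq_sum => i /andP[/andP[_ hi] _].
  by apply: hle; lia.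
have h2 : \sum_(p.+1 <= i < n) F i <= \sum_(p.+1 <= i < n) G i.
  rewrite big_nat_cond [X in _ <= X]big_nat_cond; apply: leq_sum => i /andP[/andP[_ hi] _].
  by apply: hle; lia.
lia.
Qed.

Lemma sum_le_nat (F G : nat -> nat) n :
  (forall i, i < n -> F i <= G i) ->
  \sum_(0 <= i < n) F i <= \sum_(0 <= i < n) G i.
Proof.
move=> hle; rewrite big_nat_cond [X in _ <= X]big_nat_cond; apply: leq_sum => i /andP[/andP[_ hi] _].
exact: hle.
Qed.

Lemma sum_eq_nat (F G : nat -> nat) n :
  (forall i, i < n -> F i = G i) ->
  \sum_(0 <= i < n) F i = \sum_(0 <= i < n) G i.
Proof. by move=> h; apply: eq_big_nat => i /andP[_ hi]; apply: h. Qed.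

Lemma sum_ind_eq x K : \sum_(0 <= j < K) (x == j) = (x < K).
Proof.
elim: K => [|K IH]; first by rewrite big_geq.
by rewrite big_nat_recr //= IH ltnS; case: (ltngtP x K).
Qed.

Lemma sum_lt_m m n : m <= n -> \sum_(0 <= x < n) (x < m) = m.
Proof.
move=> hmn; rewrite (big_cat_nat (leq0n m) hmn) /=.
rewrite (eq_big_nat _ _ (F2 := fun _ => 1)); last by move=> i /andP[_ ->].
rewrite (eq_big_nat _ _ (F1 := fun i => (i < m) : nat) (F2 := fun _ => 0)); last first.
  by move=> i /andP[h _]; rewrite ltnNge h.
by rewrite !sum_nat_const_nat; lia.
Qed.

Lemma thresh (g : nat -> nat) n J x :
  (forall x y, x <= y -> g x <= g y) -> x < n ->
  (x < \sum_(0 <= y < n) (g y < J)) = (g x < J).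
Proof.
move=> mono hx; case: (ltnP (g x) J) => hg.
- have : x.+1 <= \sum_(0 <= y < n) (g y < J).
    rewrite (big_cat_nat (leq0n x.+1) hx) /=.
    apply: leq_trans (leq_addr _ _).
    rewrite -[X in X <= _](sum_lt_m (leqnn x.+1)).
    apply: sum_le_nat => i hi; case: (i < x.+1) => //=.
    rewrite lt0b; apply: leq_ltn_trans hg; apply: mono; lia.
  by [].
- apply/negbTE; rewrite -leqNgt.
  rewrite (big_cat_nat (leq0n x) (ltnW hx)) /=.
  rewrite [X in _ + X](eq_big_nat _ _ (F2 := fun _ => 0)); last first.
    move=> i /andP[h _]; apply/eqP; rewrite eqb0 -leqNgt; apply: leq_trans hg (mono _ _ h).
  rewrite sum_nat_const_nat muln0 addn0.
  rewrite -[X in _ <= X](sum_lt_m (leqnn x)); apply: sum_le_nat => i hi; lia.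
Qed.

Definition cnt (s : seq nat) (x : nat) := count (fun y => y <= x) s.

Lemma cnt_mono s x y : x <= y -> cnt s x <= cnt s y.
Proof. move=> h; apply: sub_count => z /= hz; exact: leq_trans hz h. Qed.

Lemma cnt_split s x : 0 < x -> cnt s x = cnt s x.-1 + count (pred1 x) s.
Proof.
move=> hx; rewrite /cnt; elim: s => [|y s IH] //=; rewrite IH.
have e : ((y <= x) : nat) = (y <= x.-1) + (y == x).
  case: (ltngtP y x) => h //=; [have -> : y <= x.-1 by lia | have -> : (y <= x.-1) = false by lia | have -> : (y <= x.-1) = false by lia] => //.
rewrite e -!addnA; congr (_ + _); rewrite !addnA; congr (_ + _); exact: addnC.
Qed.

Lemma cnt_cut s x : 0 < x -> (cnt s x.-1 == cnt s x) = (x \notin s).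
Proof.
move=> hx; rewrite (cnt_split s hx) -[X in X == _]addn0 eqn_add2l eq_sym.
by rewrite -has_pred1 has_count lt0n negbK.
Qed.

Lemma size_compSet c : size (compSet c) = (size c).-1.
Proof. by rewrite /compSet size_map size_iota. Qed.

Lemma compSet_cons g c :
  compSet (g :: c) = if c is [::] then [::] else g :: map (addn g) (compSet c).
Proof.
case: c => [|x c] //; rewrite /compSet /=.
rewrite addn0; congr (_ :: _).
rewrite -map_comp -[2]/(1 + 1) iotaDl -map_comp; apply: eq_map => m /=.
by [].
Qed.

Lemma compSet_rcons g y :
  compSet (rcons g y) = [seq sumn (take m g) | m <- iota 1 (size g)].
Proof.
rewrite /compSet size_rcons /=; apply/eq_in_map => m; rewrite mem_iota => /andP[_ hm].
by rewrite -cats1 takel_cat //; lia.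
Qed.

Lemma compSet_rcons1 g : 0 < size g ->
  compSet (rcons g 1) = rcons (compSet g) (sumn g).
Proof.
move=> hg; rewrite compSet_rcons /compSet.
have e : forall k, iota 1 k.+1 = rcons (iota 1 k) k.+1.
  by move=> k; rewrite -[k.+1]addn1 iotaD cats1 add1n addn1.
move: hg; case E: (size g) => [|k] // _; by rewrite e map_rcons -E take_size E.
Qed.

Lemma sumn_take_drop c m : sumn c = sumn (take m c) + sumn (drop m c).
Proof. by rewrite -sumn_cat cat_take_drop. Qed.

Lemma pos_sumn c : all (fun x => 0 < x) c -> 0 < size c -> 0 < sumn c.
Proof. by case: c => [|x c] //= /andP[hx _] _; apply: leq_trans hx (leq_addr _ _). Qed.

Lemma compSet_range c x : all (fun x => 0 < x) c -> x \in compSet c -> 0 < x < sumn c.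
Proof.
move=> hpos /mapP[m]; rewrite mem_iota => /andP[h1 h2] ->.
rewrite (sumn_take_drop c m); apply/andP; split.
- apply: pos_sumn; first by apply/allP => y /mem_take; exact: (allP hpos).
  rewrite size_take; case: ifP => // _; move: h1 h2; case: (size c) => [|k]; case: m => //.
- rewrite -[X in X < _]addn0 ltn_add2l; apply: pos_sumn.
  + by apply/allP => y /mem_drop; exact: (allP hpos).
  + by rewrite size_drop subn_gt0; move: h1 h2; case: (size c) => [|k]; case: m.
Qed.

Lemma fiber_comp c n j : is_comp n c ->
  \sum_(0 <= x < n) (cnt (compSet c) x == j) = nth 0 c j.
Proof.
elim: c n j => [|g c IH] n j /andP[/= hpos /eqP hs].
  by rewrite -hs big_geq //= nth_nil.
move: hpos => /andP[hg hpos].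
case: c IH hpos hs => [|x c] IH hpos hs.
  rewrite compSet_cons /cnt /=.
  rewrite (eq_big_nat _ _ (F2 := fun _ => (j == 0 : nat))); last by move=> i _; rewrite eq_sym.
  rewrite sum_nat_const_nat subn0 /= addn0 in hs *; rewrite -hs.
  by case: j => [|j] /=; rewrite ?muln1 ?muln0 // nth_nil.
set c' := x :: c in IH hpos hs *.
have hc' : is_comp (sumn c') c' by rewrite /is_comp hpos eqxx.
rewrite -hs compSet_cons /c' -/c'.
rewrite (big_cat_nat (leq0n g) (leq_addr _ _)) /=.
rewrite (eq_big_nat _ _ (F2 := fun _ => (j == 0 : nat))); last first.
  move=> i /andP[_ hi]; rewrite /cnt /= leqNgt hi /= count_map.
  rewrite (eq_count (a2 := pred0)) ?count_pred0 //; first by rewrite eq_sym.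
  by move=> y /=; rewrite leqNgt (leq_trans hi (leq_addr _ _)).
rewrite sum_nat_const_nat subn0.
rewrite -{2}[g]add0n big_addn addKn.
have E : forall i, (g <= i + g) + cnt (map (addn g) (compSet c')) (i + g) = (cnt (compSet c') i).+1.
  move=> i; rewrite /cnt /= leq_addl add1n count_map.
  by congr S; apply: eq_count => y /=; rewrite addnC leq_add2r.
under eq_big_nat => i _ do rewrite E.
case: j => [|j] /=.
  rewrite muln1 big1_seq ?addn0 //.
rewrite muln0 add0n -(IH _ _ hc').
by [].
Qed.

Lemma sumn_rcons s x : sumn (rcons s x) = sumn s + x.
Proof. by rewrite -cats1 sumn_cat /= addn0. Qed.

Lemma comp_of_cuts (P : pred nat) n : 0 < n ->
  exists g, is_comp n g /\ forall i, 0 < i -> i < n -> (i \in compSet g) = P i.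
Proof.
case: n => [|m] // _; elim: m => [|m [g [/andP[hpos /eqP hs] hg]]].
  by exists [:: 1]; split => // i; case: i => [|[|]].
have hsz : 0 < size g by case: g hs {hpos hg}.
case hP: (P m.+1).
  exists (rcons g 1); split.
    by rewrite /is_comp all_rcons hpos sumn_rcons hs addn1 eqxx.
  move=> i hi1 hi2; rewrite compSet_rcons1 // mem_rcons in_cons hs.
  case: (ltngtP i m.+1) => [hlt|hgt|->]; last by rewrite hP.
    by rewrite /= hg.
  by move: hi2; rewrite ltnS leqNgt hgt.
case/lastP: g hpos hs hg hsz => [|g x] // hpos hs hg _.
exists (rcons g x.+1); split.
  move: hpos; rewrite /is_comp !all_rcons => /andP[_ ->].
  by rewrite sumn_rcons -hs sumn_rcons addnS eqxx.
move=> i hi1 hi2.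
have -> : compSet (rcons g x.+1) = compSet (rcons g x) by rewrite !compSet_rcons.
case: (ltngtP i m.+1) => [hlt|hgt|->]; first by rewrite hg.
  by move: hi2; rewrite ltnS leqNgt hgt.
rewrite hP; apply/negbTE/negP => /(compSet_range hpos).
by rewrite hs ltnn andbF.
Qed.

Lemma is_comp_nil c : is_comp 0 c -> c = [::].
Proof.
case: c => [|x c] // /andP[/andP[hx _]] /=; rewrite addn_eq0 => /andP[/eqP hx0 _].
by rewrite hx0 in hx.
Qed.

Lemma refines_cuts gam bet n : is_comp n gam -> is_comp n bet ->
  {subset compSet bet <= compSet gam} -> refines gam bet.
Proof.
elim: gam n bet => [|g gam IH] n bet.
  move=> /andP[_ /eqP /= <-] /is_comp_nil -> _.
  by exists [::].
move=> hg hb hsub.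
have hgpos := hg; move: hgpos => /andP[/= /andP[g0 gpos] /eqP gs].
case: bet hb hsub => [|b bet] hb hsub.
  move: hb => /andP[_ /eqP /= hn]; move: g0 gs; rewrite -hn; clear hg IH hsub; case: g => [|g1] //.
move: (hb) => /andP[/= /andP[b0 bpos] /eqP bs].
case: bet hb hsub bpos bs => [|b' bet] hb hsub bpos bs.
  exists [:: g :: gam]; split => /=; first by rewrite cats0.
    by [].
  by rewrite gs -bs addn0.
set bet' := b' :: bet in hb hsub bpos bs *.
have hbin : b \in compSet (g :: gam) by apply: hsub; rewrite compSet_cons /bet' in_cons eqxx.
case: gam IH hg gpos gs hbin hsub => [|g' gam] IH hg gpos gs hbin hsub.
  by rewrite compSet_cons in hbin.
set gam' := g' :: gam in IH hg gpos gs hbin hsub *.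
have cg' : is_comp (n - g) gam' by rewrite /is_comp gpos -gs addKn eqxx.
have cpos : forall y, y \in compSet bet' -> 0 < y.
  by move=> y /(compSet_range bpos) /andP[].
have cpos' : forall y, y \in compSet gam' -> 0 < y.
  by move=> y /(compSet_range gpos) /andP[].
move: hbin; rewrite compSet_cons /gam' -/gam' in_cons => /orP[/eqP eb|].
-
  have cb' : is_comp (n - g) bet' by rewrite /is_comp bpos -bs eb addKn eqxx.
  have [ss [h1 h2 h3]] : refines gam' bet'.
    apply: (IH _ _ cg' cb') => y hy.
    have : b + y \in compSet (g :: gam') by apply: hsub; rewrite compSet_cons /bet' -/bet' in_cons mem_map ?hy ?orbT //; exact: addnI.
    rewrite compSet_cons /gam' -/gam' in_cons => /orP[/eqP|].
      by rewrite eb -{2}[g]addn0 => /addnI e; move: (cpos _ hy); rewrite e.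
    by rewrite eb mem_map //; exact: addnI.
  exists ([:: g] :: ss); split => /=.
  + by rewrite h1.
  + by rewrite h2.
  + by rewrite h3 addn0 eb.
-
  move=> /mapP[y hy eb].
  have y0 := cpos' _ hy.
  have cb' : is_comp (n - g) (y :: bet').
    apply/andP; split; first by rewrite /= y0.
    by rewrite /= -bs eb -addnA addKn.
  have [ss [h1 h2 h3]] : refines gam' (y :: bet').
    apply: (IH _ _ cg' cb') => z; rewrite compSet_cons /bet' -/bet' in_cons => /orP[/eqP -> //|].
    move=> /mapP[z' hz' ->].
    have : b + z' \in compSet (g :: gam') by apply: hsub; rewrite compSet_cons /bet' -/bet' in_cons mem_map ?hz' ?orbT //; exact: addnI.
    rewrite compSet_cons /gam' -/gam' in_cons eb => /orP[|].
      by rewrite -addnA -{2}[g]addn0 eqn_add2l addn_eq0 => /andP[/eqP e _]; move: y0; rewrite e.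
    by rewrite -addnA mem_map //; exact: addnI.
  case: ss h1 h2 h3 => [|s0 ss] //= h1 [h2] [h3 h4].
  exists ((g :: s0) :: ss); split => /=.
  + by rewrite h1.
  + by rewrite h2.
  + by rewrite h3 h4 eb.
Qed.

Section Fn.
Variable n : nat.
Implicit Types u w : 'S_n.

Definition fn w (x : nat) : nat :=
  match (insub x : option 'I_n) with Some i => val (w i) | None => x end.

Lemma fnE w (i : 'I_n) : fn w i = w i.
Proof. by rewrite /fn valK. Qed.

Lemma fnE' w x (hx : x < n) : fn w x = w (Ordinal hx).
Proof. by rewrite -fnE. Qed.

Lemma fn_out w x : n <= x -> fn w x = x.
Proof. by move=> hx; rewrite /fn insubF // ltnNge hx. Qed.

Lemma fn_lt w x : (fn w x < n) = (x < n).
Proof.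
case: (ltnP x n) => hx; first by rewrite (fnE' w hx) ltn_ord.
by rewrite fn_out // ltnNge hx.
Qed.

Lemma fnM u w x : fn (w * u)%g x = fn u (fn w x).
Proof.
case: (ltnP x n) => hx; last by rewrite !fn_out.
by rewrite (fnE' _ hx) permM (fnE' w hx) fnE.
Qed.

Lemma fn1 x : fn 1%g x = x.
Proof.
case: (ltnP x n) => hx; last by rewrite !fn_out.
by rewrite (fnE' _ hx) perm1.
Qed.

Lemma fnK w x : fn w^-1%g (fn w x) = x.
Proof. by rewrite -fnM mulgV fn1. Qed.

Lemma fnKV w x : fn w (fn w^-1%g x) = x.
Proof. by rewrite -fnM mulVg fn1. Qed.

Lemma fn_inj w : injective (fn w).
Proof. exact: can_inj (fnK w). Qed.

Lemma fn_rank w p : p < n -> \sum_(0 <= q < n) (fn w q < fn w p) = fn w p.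
Proof.
move=> hp; rewrite big_mkord.
rewrite (reindex_inj (h := fun i => w^-1%g i)) /=; last exact: perm_inj.
under eq_bigr => i _ do rewrite fnE permKV.
transitivity (\sum_(0 <= x < n) (x < fn w p)); first by rewrite big_mkord.
by apply: sum_lt_m; rewrite ltnW // fn_lt.
Qed.

Lemma sum_perm w (F : nat -> nat) :
  \sum_(0 <= q < n) F (fn w q) = \sum_(0 <= x < n) F x.
Proof.
rewrite !big_mkord (reindex_inj (h := fun i => w^-1%g i)) /=; last exact: perm_inj.
by apply: eq_bigr => i _; rewrite fnE permKV.
Qed.

End Fn.

Section Rank.
Variable n : nat.
Variables kap t : nat -> nat.
Hypothesis tinj : forall p p', p < n -> p' < n -> t p = t p' -> p = p'.

Definition ltk p' p := (kap p' < kap p) || ((kap p' == kap p) && (t p' < t p)).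
Definition rk p := \sum_(0 <= q < n) ltk q p.

Lemma ltk_irr p : ltk p p = false.
Proof. by rewrite /ltk !ltnn andbF. Qed.

Lemma ltk_trans p1 p2 p3 : ltk p1 p2 -> ltk p2 p3 -> ltk p1 p3.
Proof.
rewrite /ltk => /orP[h1|/andP[/eqP e1 h1]] /orP[h2|/andP[/eqP e2 h2]].
- by rewrite (ltn_trans h1 h2).
- by rewrite -e2 h1.
- by rewrite e1 h2.
- by rewrite e1 e2 eqxx (ltn_trans h1 h2) orbT.
Qed.

Lemma ltk_total p p' : p < n -> p' < n -> p != p' -> ltk p p' || ltk p' p.
Proof.
move=> hp hp' hne; rewrite /ltk.
case: (ltngtP (kap p) (kap p')) => //= _.
case: (ltngtP (t p) (t p')) => // e.
by move: hne; rewrite (tinj hp hp' e) eqxx.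
Qed.

Lemma rk_lt p : p < n -> rk p < n.
Proof.
move=> hp; rewrite /rk.
apply: (@leq_trans (\sum_(0 <= q < n) 1)); last by rewrite sum_nat_const_nat subn0 muln1.
apply: (@sum_lt_pt (fun q => ltk q p) (fun _ => 1) n p hp) => [i _|]; first by case: ltk.
by rewrite ltk_irr.
Qed.

Lemma rk_mono p p' : p < n -> p' < n -> ltk p' p -> rk p' < rk p.
Proof.
move=> hp hp' hlt; rewrite /rk.
apply: (@sum_lt_pt (fun q => ltk q p') (fun q => ltk q p) n p' hp') => [i _|].
  by case h: (ltk i p') => //=; rewrite (ltk_trans h hlt).
by rewrite ltk_irr hlt.
Qed.

Lemma rk_iff p p' : p < n -> p' < n -> (rk p' < rk p) = ltk p' p.
Proof.
move=> hp hp'; apply/idP/idP; last exact: rk_mono.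
move=> hlt; case e: (p' == p).
  by move: hlt; rewrite (eqP e) ltnn.
have := ltk_total hp' hp (negbT e); case/orP => // h.
by move: (rk_mono hp' hp h); rewrite ltnNge ltnW.
Qed.

Lemma rk_inj p p' : p < n -> p' < n -> rk p = rk p' -> p = p'.
Proof.
move=> hp hp' e; apply/eqP; apply: contraT => hne.
have := ltk_total hp hp' hne; case/orP => h.
  by move: (rk_mono hp' hp h); rewrite e ltnn.
by move: (rk_mono hp hp' h); rewrite e ltnn.
Qed.

Definition rk_ord (i : 'I_n) : 'I_n := Ordinal (rk_lt (ltn_ord i)).

Lemma rk_ord_inj : injective rk_ord.
Proof. by move=> i j /(congr1 val) /= /(rk_inj (ltn_ord i) (ltn_ord j)) /val_inj. Qed.

Definition rkperm : 'S_n := perm rk_ord_inj.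

Lemma fn_rkperm p : p < n -> fn rkperm p = rk p.
Proof. by move=> hp; rewrite (fnE' _ hp) permE. Qed.

Lemma rk_lab (g : nat -> nat) :
  (forall x y, x <= y -> g x <= g y) ->
  (forall j, \sum_(0 <= q < n) (kap q == j) = \sum_(0 <= x < n) (g x == j)) ->
  forall p, p < n -> g (rk p) = kap p.
Proof.
move=> mono hfib p hp; set K := kap p.
have cum : forall J, \sum_(0 <= q < n) (kap q < J) = \sum_(0 <= x < n) (g x < J).
  move=> J.
  transitivity (\sum_(0 <= q < n) \sum_(0 <= j < J) (kap q == j)).
    by apply: eq_big_nat => q _; rewrite sum_ind_eq.
  rewrite exchange_big_nat /=.
  transitivity (\sum_(0 <= j < J) \sum_(0 <= x < n) (g x == j)).
    by apply: eq_big_nat => j _; rewrite hfib.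
  rewrite exchange_big_nat /=.
  by apply: eq_big_nat => x _; rewrite sum_ind_eq.
have rkE : rk p = \sum_(0 <= q < n) (kap q < K) + \sum_(0 <= q < n) ((kap q == K) && (t q < t p)).
  rewrite /rk -big_split /=; apply: eq_big_nat => q _; rewrite /ltk -/K.
  by case: (ltngtP (kap q) K).
have hB : \sum_(0 <= q < n) ((kap q == K) && (t q < t p)) < \sum_(0 <= q < n) (kap q == K).
  apply: (@sum_lt_pt (fun q => (kap q == K) && (t q < t p)) (fun q => kap q == K) n p hp).
  by move=> i _; case: (kap i == K); rewrite ?leq_b1.
  by rewrite eqxx ltnn.
have hS : \sum_(0 <= x < n) (g x < K.+1) = \sum_(0 <= x < n) (g x < K) + \sum_(0 <= x < n) (g x == K).
  rewrite -big_split /=; apply: eq_big_nat => x _.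
  by rewrite ltnS; case: (ltngtP (g x) K).
have hrk := rk_lt hp.
have h1 : rk p < \sum_(0 <= x < n) (g x < K.+1).
  by rewrite hS rkE cum -hfib ltn_add2l.
have h2 : ~~ (rk p < \sum_(0 <= x < n) (g x < K)).
  by rewrite -leqNgt rkE cum leq_addr.
rewrite (thresh K.+1 mono hrk) ltnS in h1.
rewrite (thresh K mono hrk) -leqNgt in h2.
by apply/eqP; rewrite eqn_leq h1 h2.
Qed.

End Rank.

Section X.
Variable n : nat.
Implicit Types u v w : 'S_n.

Definition inX (P : pred nat) w : Prop :=
  forall i, 0 < i -> i < n -> ~~ P i -> fn w i.-1 < fn w i.
Definition Xb (P : pred nat) w : bool :=
  [forall i : 'I_n, ((0 < i) && (fn w i < fn w i.-1)) ==> P i].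

Lemma XbP P w : reflect (inX P w) (Xb P w).
Proof.
apply: (iffP forallP) => h.
- move=> i h0 hn hP; have := h (Ordinal hn); rewrite /= h0 /=.
  case: (ltngtP (fn w i) (fn w i.-1)) => [_|//|e].
    by move/implyP => /(_ isT); rewrite (negbTE hP).
  by move/fn_inj: e => e; exfalso; lia.
- move=> i; apply/implyP => /andP[h0 hlt]; apply: contraLR hlt => hP.
  by rewrite -leqNgt ltnW // h.
Qed.

Lemma desbE w (i : 'I_n) : desb w i = (0 < i) && (fn w i < fn w i.-1).
Proof.
apply/existsP/idP.
- move=> [j /existsP [j' /and4P[/eqP hj /eqP hj' h0 hlt]]].
  by rewrite h0 /= -hj -hj' !fnE.
- move=> /andP[h0 hlt].
  have hi1 : i.-1 < n by apply: leq_ltn_trans (leq_pred _) (ltn_ord i).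
  exists (Ordinal hi1); apply/existsP; exists i.
  by rewrite /= !eqxx h0 /=; move: hlt; rewrite (fnE' w hi1) fnE.
Qed.

Lemma BsetE (k : comPzRingType) s w : Bset k n s w = (Xb (mem s) w)%:R%R.
Proof.
rewrite /Bset ffunE (_ : [forall j : 'I_n, _] = Xb (mem s) w); last first.
  by apply: eq_forallb => i; rewrite desbE.
by case: Xb.
Qed.

Lemma Xb_eq P Q w : (forall i, 0 < i -> i < n -> P i = Q i) -> Xb P w = Xb Q w.
Proof.
move=> h; apply: eq_forallb => i; case h0: (0 < i) => //=.
by rewrite h.
Qed.

End X.

Section Core.
Variable n : nat.
Variables sa sb : seq nat.
Implicit Types u v w : 'S_n.
Local Notation a := (cnt sa).

Lemma a_mono x y : x <= y -> a x <= a y.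
Proof. exact: cnt_mono. Qed.

Lemma interval u x y : inX (mem sa) u -> x < y -> y < n -> a x = a y -> fn u x < fn u y.
Proof.
move=> hu; elim: y => [//|y IH] hxy hy e.
have hny : y.+1 \notin sa.
  rewrite -(cnt_cut sa (ltn0Sn y)) /=.
  have h1 : a y <= a y.+1 := a_mono (leqnSn y).
  have h2 : a y.+1 <= a y by rewrite -e; apply: a_mono; rewrite -ltnS.
  by rewrite eqn_leq h1 h2.
have step : fn u y < fn u y.+1 by have := hu y.+1 (ltn0Sn y) hy hny.
case: (ltngtP x y) hxy => [hlt _|hgt|->] //.
- apply: ltn_trans step; apply: IH => //; first exact: ltnW.
  have h1 : a x <= a y := a_mono (ltnW hlt).
  have h2 : a y <= a x by rewrite e; apply: a_mono.
  by apply/eqP; rewrite eqn_leq h1 h2.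
- by rewrite ltnS leqNgt hgt.
Qed.

Definition Wc v w := Xb (mem sb) w && Xb (mem sa) (w^-1 * v)%g.
Definition kw w x := a (fn w x).
Definition Dk (kap : nat -> nat) : pred nat := fun i => (i \in sb) || (kap i.-1 != kap i).

Lemma fvinj v : forall p p', p < n -> p' < n -> fn v p = fn v p' -> p = p'.
Proof. by move=> p p' _ _; apply: fn_inj. Qed.

Lemma U v w p p' : Wc v w -> p < n -> p' < n ->
  (fn w p' < fn w p) = ltk (kw w) (fn v) p' p.
Proof.
move=> /andP[_ /XbP hu] hp hp'; rewrite /ltk /kw.
have ev : forall q, fn v q = fn (w^-1 * v)%g (fn w q) by move=> q; rewrite fnM fnK.
set x' := fn w p'; set x := fn w p.
have hx : x < n by rewrite fn_lt.
have hx' : x' < n by rewrite fn_lt.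
case: (ltngtP (a x') (a x)) => [hlt|hgt|he] /=.
- apply/idP; apply: contraLR hlt; rewrite -!leqNgt; exact: a_mono.
- apply/negbTE; rewrite -leqNgt; apply: ltnW; apply: contraLR hgt; rewrite -!leqNgt; exact: a_mono.
- rewrite !ev -/x -/x'.
  case: (ltngtP x' x) => [h|h|h].
  + by rewrite (interval hu h hx he).
  + by apply/esym/negbTE; rewrite -leqNgt ltnW // (interval hu h hx' (esym he)).
  + by rewrite h ltnn.
Qed.

Lemma U2 v w p : Wc v w -> p < n -> fn w p = rk n (kw w) (fn v) p.
Proof.
move=> hW hp; rewrite -(fn_rank w hp) /rk.
by apply: eq_big_nat => q /andP[_ hq]; rewrite (U hW hp hq).
Qed.

Lemma uniqW v w w' : Wc v w -> Wc v w' -> (forall p, p < n -> kw w p = kw w' p) -> w = w'.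
Proof.
move=> h h' e; apply/permP => i; apply: val_inj => /=.
rewrite -!fnE (U2 h (ltn_ord i)) (U2 h' (ltn_ord i)) /rk.
apply: eq_big_nat => q /andP[_ hq]; rewrite /ltk !e //.
Qed.

Lemma soundW v w : Wc v w -> inX (Dk (kw w)) v.
Proof.
move=> hW i h0 hi; rewrite /Dk negb_or negbK => /andP[hnb /eqP he].
have hi1 : i.-1 < n by apply: leq_ltn_trans (leq_pred _) hi.
move: (hW) => /andP[/XbP hwb _].
have := hwb i h0 hi hnb; rewrite (U hW hi hi1) /ltk he ltnn eqxx /=.
by [].
Qed.

Lemma existW v w0 : inX (mem sb) w0 -> inX (Dk (kw w0)) v ->
  Wc v (rkperm (kw w0) (@fvinj v)) /\
  forall p, p < n -> kw (rkperm (kw w0) (@fvinj v)) p = kw w0 p.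
Proof.
move=> hw0 hD; set w := rkperm _ _.
have hfib : forall j, \sum_(0 <= q < n) (kw w0 q == j) = \sum_(0 <= x < n) (a x == j).
  by move=> j; rewrite /kw (sum_perm w0 (fun x => a x == j)).
have hlab : forall p, p < n -> kw w p = kw w0 p.
  move=> p hp; rewrite /kw /w fn_rkperm //.
  exact: (rk_lab (fn v) a_mono hfib hp).
split; last exact: hlab.
apply/andP; split; apply/XbP.
- move=> i h0 hi hnb.
  have hi1 : i.-1 < n by apply: leq_ltn_trans (leq_pred _) hi.
  rewrite /w !fn_rkperm // (rk_iff (kw w0) (@fvinj v)) // /ltk.
  have hle : kw w0 i.-1 <= kw w0 i by apply: a_mono; apply: ltnW; apply: hw0.
  move: hle; rewrite leq_eqVlt => /orP[/eqP he|->] //.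
  rewrite he ltnn eqxx /=.
  have hnb' : (i \in sb) = false := negbTE hnb.
  have := hD i h0 hi; rewrite /Dk hnb' he eqxx /=.
  by apply.
-
  move=> x h0 hx hna.
  have hx1 : x.-1 < n by apply: leq_ltn_trans (leq_pred _) hx.
  rewrite !fnM.
  set p := fn w^-1%g x.-1; set p' := fn w^-1%g x.
  have hp : p < n by rewrite fn_lt.
  have hp' : p' < n by rewrite fn_lt.
  have : fn w p < fn w p' by rewrite /p /p' !fnKV; lia.
  rewrite /w !fn_rkperm // (rk_iff (kw w0) (@fvinj v)) // /ltk.
  have ek : kw w0 p = kw w0 p'.
    rewrite -!hlab // /kw /p /p' !fnKV.
    by apply/eqP; rewrite (cnt_cut sa h0).
  by rewrite ek ltnn eqxx.
Qed.

End Core.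

Lemma nb0 (b : bool) : ~~ b -> (b : nat) = 0.
Proof. by case: b. Qed.

Section Main.
Variable n : nat.
Variables sa sb : seq nat.
Implicit Types u v w : 'S_n.

Definition Lt := {ffun 'I_n -> 'I_(size sa).+1}.

Lemma cnt_lt x : cnt sa x < (size sa).+1.
Proof. by rewrite ltnS /cnt count_size. Qed.

Definition lab x : 'I_(size sa).+1 := Ordinal (cnt_lt x).
Definition lam w : Lt := [ffun p : 'I_n => lab (fn w p)].
Definition ln (l : Lt) (x : nat) : nat :=
  match (insub x : option 'I_n) with Some i => val (l i) | None => 0 end.

Lemma lnE (l : Lt) x (hx : x < n) : ln l x = l (Ordinal hx).
Proof. by rewrite /ln insubT. Qed.

Lemma ln_lam w x : x < n -> ln (lam w) x = kw sa w x.
Proof. by move=> hx; rewrite (lnE _ hx) ffunE. Qed.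

Definition Lam := [set l : Lt | [exists w : 'S_n, Xb (mem sb) w && (lam w == l)]].
Definition goodb (l : Lt) := [forall i : 'I_n, ((0 < i) && (val i \notin sb)) ==> (ln l i.-1 == ln l i)].
Definition DL (l : Lt) := Dk sb (ln l).

Lemma lam_eq w w' : (forall p, p < n -> kw sa w p = kw sa w' p) -> lam w = lam w'.
Proof.
move=> h; apply/ffunP => p; rewrite !ffunE; apply: val_inj => /=.
by have := h _ (ltn_ord p); rewrite /kw.
Qed.

Lemma lam_kw w w' : lam w = lam w' -> forall p, p < n -> kw sa w p = kw sa w' p.
Proof. by move=> e p hp; rewrite -!ln_lam // e. Qed.

Lemma XbDL l w0 v : lam w0 = l -> Xb (DL l) v = Xb (Dk sb (kw sa w0)) v.
Proof.
move=> <-; apply: Xb_eq => i h0 hi; rewrite /DL /Dk !ln_lam //.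
exact: leq_ltn_trans (leq_pred _) hi.
Qed.

Lemma inner v (l : Lt) :
  \sum_(w : 'S_n) (Wc sa sb v w && (lam w == l)) = (l \in Lam) && Xb (DL l) v.
Proof.
case: (boolP (l \in Lam)) => hl /=; last first.
  apply: big1 => w _; apply: nb0; apply: contra hl => /andP[/andP[hw _] /eqP e].
  by rewrite inE; apply/existsP; exists w; rewrite hw e eqxx.
move: hl; rewrite inE => /existsP[w0 /andP[/XbP hw0 /eqP e0]].
rewrite (XbDL v e0); case: (boolP (Xb _ v)) => hD.
- have [hW hk] := existW hw0 (elimT (XbP _ _) hD).
  set ws := rkperm _ _ in hW hk.
  rewrite (bigD1 ws) //= -e0 (lam_eq hk) eqxx hW /= big1 ?addn0 // => w hne.
  apply: nb0; apply/negP => /andP[hWw /eqP ew].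
  move/negP: hne; apply; apply/eqP; apply: (uniqW hWw hW) => p hp.
  by rewrite (lam_kw ew hp) hk.
- apply: big1 => w _; apply: nb0; apply/negP => /andP[hWw /eqP ew].
  move/negP: hD; apply; apply/XbP => i h0 hi.
  have hi1 : i.-1 < n by exact: leq_ltn_trans (leq_pred _) hi.
  have := soundW hWw h0 hi.
  by rewrite /Dk -e0 in ew; rewrite /Dk !(lam_kw ew) //.
Qed.

Lemma main_count v :
  \sum_(w : 'S_n) Wc sa sb v w =
  #|[set l in Lam | goodb l]| * Xb (mem sb) v +
  \sum_(l in [set l in Lam | ~~ goodb l]) Xb (DL l) v.
Proof.
transitivity (\sum_(w : 'S_n) \sum_(l : Lt) (Wc sa sb v w && (lam w == l))).
  apply: eq_bigr => w _; rewrite (bigD1 (lam w)) //= eqxx andbT big1 ?addn0 //.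
  by move=> l hl; rewrite eq_sym (negbTE hl) andbF.
rewrite exchange_big /=.
under eq_bigr => l _ do rewrite inner.
have memG : forall l, (l \in [set l in Lam | goodb l]) = (l \in Lam) && goodb l.
  by move=> l; rewrite !inE.
have memB : forall l, (l \in [set l in Lam | ~~ goodb l]) = (l \in Lam) && ~~ goodb l.
  by move=> l; rewrite !inE.
rewrite (bigID goodb) /=; congr (_ + _).
- transitivity (\sum_(l | goodb l) ((l \in Lam) * Xb (mem sb) v)).
    apply: eq_bigr => l hg; case: (l \in Lam) => //=; rewrite mul1n.
    suff -> : Xb (DL l) v = Xb (mem sb) v by [].
    apply: Xb_eq => i h0 hi; rewrite /DL /Dk.
    case: (boolP (i \in sb)) => hb //=.
    by move/forallP: hg => /(_ (Ordinal hi)) /=; rewrite h0 (negbTE hb) /= => /eqP ->; rewrite eqxx.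
  rewrite -big_distrl /=; congr (_ * _).
  rewrite -sum1_card [RHS]big_mkcond [LHS]big_mkcond /=.
  by apply: eq_bigr => l _; rewrite memG andbC; case: goodb; case: (l \in Lam).
- rewrite [RHS]big_mkcond [LHS]big_mkcond /=.
  by apply: eq_bigr => l _; rewrite memB; case: (l \in Lam); case: (goodb l).
Qed.

End Main.

Lemma comp_size_pos n c : is_comp n c -> 0 < n -> 0 < size c.
Proof. by case: c => // /andP[_ /eqP <-]. Qed.

Lemma comp_nth_pos n c i : is_comp n c -> i < size c -> 0 < nth 0 c i.
Proof. by move=> /andP[/allP hp _] hi; apply: hp; apply: mem_nth. Qed.


Lemma sum_pos_ex n (P : pred nat) : 0 < \sum_(0 <= x < n) P x -> exists2 x, x < n & P x.
Proof.
elim: n => [|n IH]; first by rewrite big_geq.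
rewrite big_nat_recr //=; case hP: (P n); first by move=> _; exists n.
rewrite addn0 => /IH [x hx px]; exists x => //; exact: ltnW.
Qed.

Section Good.
Variable n : nat.
Variables a b : seq nat.
Hypothesis ha : is_comp n a.
Hypothesis hb : is_comp n b.
Local Notation sa := (compSet a).
Local Notation sb := (compSet b).
Local Notation bb := (cnt sb).
Local Notation Lt := (Lt n sa).

Definition Fset := [set f : {ffun 'I_(size b) -> 'I_(size a)} |
      [forall j : 'I_(size a),
         nth 0 a j == (\sum_(i : 'I_(size b) | f i == j) nth 0 b i)]].

Lemma eta_card : eta a b = #|Fset|.
Proof. by []. Qed.

Definition fN (f : {ffun 'I_(size b) -> 'I_(size a)}) (i : nat) : nat :=
  match (insub i : option 'I_(size b)) with Some o => val (f o) | None => 0 end.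

Lemma fNE (f : {ffun 'I_(size b) -> 'I_(size a)}) (o : 'I_(size b)) : fN f (val o) = val (f o).
Proof. by rewrite /fN valK. Qed.

Lemma fN_le f i : fN f i <= size sa.
Proof.
rewrite size_compSet /fN; case: insub => // o.
by case: (f o) => x /=; case: (size a).
Qed.

Lemma bb_lt p : p < n -> bb p < size b.
Proof.
move=> hp; have hs := comp_size_pos hb (leq_ltn_trans (leq0n p) hp).
apply: leq_ltn_trans (count_size _ _) _; rewrite size_compSet; by case: (size b) hs.
Qed.

Definition Phi f : Lt := [ffun p : 'I_n => inord (fN f (bb p))].

Lemma ln_Phi f p : p < n -> ln (Phi f) p = fN f (bb p).
Proof. by move=> hp; rewrite (lnE _ hp) ffunE inordK // ltnS fN_le. Qed.

Lemma Fib f j : \sum_(0 <= p < n) (fN f (bb p) == j) =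
  \sum_(i : 'I_(size b)) (val (f i) == j) * nth 0 b i.
Proof.
transitivity (\sum_(0 <= p < n) \sum_(i : 'I_(size b)) (bb p == i) * (val (f i) == j)).
  apply: eq_big_nat => p /andP[_ hp].
  rewrite (bigD1 (Ordinal (bb_lt hp))) //= eqxx mul1n -(fNE f (Ordinal (bb_lt hp))) /=.
  rewrite big1 ?addn0 // => i hi; suff -> : (bb p == i) = false by [].
  by apply/negbTE; apply: contra hi => /eqP e; apply/eqP; apply: val_inj.
rewrite exchange_big /=; apply: eq_bigr => i _.
rewrite -(fiber_comp _ hb) big_distrr /=.
by apply: eq_big_nat => p _; rewrite mulnC.
Qed.

Lemma F_fib f : f \in Fset -> forall j,
  \sum_(0 <= p < n) (fN f (bb p) == j) = nth 0 a j.
Proof.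
rewrite inE => /forallP hF j; rewrite Fib.
case: (ltnP j (size a)) => hj.
  move/eqP: (hF (Ordinal hj)) => ->; rewrite [RHS]big_mkcond /=.
  apply: eq_bigr => i _; have -> : (f i == Ordinal hj) = (val (f i) == j) by [].
  by case: (val (f i) == j); rewrite ?mul1n ?mul0n.
rewrite nth_default // big1 // => i _.
by rewrite (_ : (val (f i) == j) = false) //; apply/negbTE; rewrite neq_ltn (leq_trans (ltn_ord _) hj).
Qed.

End Good.

Section Good2.
Variable n : nat.
Variables a b : seq nat.
Hypothesis ha : is_comp n a.
Hypothesis hb : is_comp n b.
Local Notation sa := (compSet a).
Local Notation sb := (compSet b).
Local Notation bb := (cnt sb).
Local Notation Lt := (Lt n sa).

Lemma bb_step i : 0 < i -> i \notin sb -> bb i.-1 = bb i.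
Proof. by move=> h0 hnb; apply/eqP; rewrite cnt_cut. Qed.

Lemma Good1 f : f \in Fset a b -> Phi n f \in Lam n sa sb /\ goodb sb (Phi n f).
Proof.
move=> hF.
have tinj : forall p p', p < n -> p' < n -> id p = id p' -> p = p' by [].
set kap := fun p => fN f (bb p).
set w0 := rkperm kap tinj.
have hfib : forall j, \sum_(0 <= q < n) (kap q == j) = \sum_(0 <= x < n) (cnt sa x == j).
  by move=> j; rewrite (fiber_comp _ ha) (F_fib hb hF).
have hl : forall p, p < n -> cnt sa (fn w0 p) = kap p.
  move=> p hp; rewrite fn_rkperm //; exact: (rk_lab id (@cnt_mono sa) hfib hp).
split; last first.
  apply/forallP => i; apply/implyP => /andP[h0 hnb].
  have hi1 : i.-1 < n by exact: leq_ltn_trans (leq_pred _) (ltn_ord i).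
  by rewrite !ln_Phi // bb_step.
rewrite inE; apply/existsP; exists w0; apply/andP; split.
  apply/XbP => i h0 hi hnb.
  have hi1 : i.-1 < n by exact: leq_ltn_trans (leq_pred _) hi.
  rewrite /w0 !fn_rkperm // (rk_iff kap tinj) // /ltk /kap bb_step // ltnn eqxx /=.
  lia.
apply/eqP/ffunP => p; rewrite !ffunE; apply: val_inj => /=.
by rewrite hl // inordK // ltnS fN_le.
Qed.

Lemma Good2 : {in Fset a b &, injective (@Phi n a b)}.
Proof.
move=> f g _ _ e; apply/ffunP => o.
have hpos : 0 < \sum_(0 <= x < n) (bb x == o) by rewrite (fiber_comp _ hb) (comp_nth_pos hb).
have [p hp /eqP hpo] := sum_pos_ex hpos.
have := ln_Phi f hp; rewrite e ln_Phi // hpo !fNE => h.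
by apply: val_inj.
Qed.


Lemma Blk (l : Lt) : goodb sb l -> forall p d, p + d < n -> bb p = bb (p + d) -> ln l p = ln l (p + d).
Proof.
move=> hg p; elim=> [|d IH] hpd e; first by rewrite addn0.
have h1 : bb p <= bb (p + d) by apply: cnt_mono; apply: leq_addr.
have h2 : bb (p + d) <= bb (p + d.+1) by apply: cnt_mono; rewrite addnS.
have e1 : bb p = bb (p + d) by apply/eqP; rewrite eqn_leq h1 e h2.
have hpd' : p + d < n by apply: ltn_trans hpd; rewrite addnS.
rewrite (IH hpd' e1).
have hnb : (p + d).+1 \notin sb.
  by rewrite -(cnt_cut sb (ltn0Sn _)) /= -e1 -addnS -e eqxx.
move/forallP: hg => /(_ (Ordinal hpd)) /=; rewrite ?addnS /= hnb /= => /eqP.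
by rewrite ?addnS.
Qed.

Lemma Blk2 (l : Lt) : goodb sb l -> forall p q, p < n -> q < n -> bb p = bb q -> ln l p = ln l q.
Proof.
move=> hg p q hp hq e.
case: (leqP p q) => h.
  by rewrite -(subnKC h) in e hq *; apply: Blk.
by rewrite -(subnKC (ltnW h)) in e hp *; symmetry; apply: Blk.
Qed.

Lemma Good3 (l : Lt) : l \in Lam n sa sb -> goodb sb l -> exists2 f, f \in Fset a b & Phi n f = l.
Proof.
rewrite inE => /existsP[w0 /andP[_ /eqP e0]] hg.
pose g (o : 'I_(size b)) := oapp (fun p : 'I_n => ln l p) 0 [pick p : 'I_n | bb p == o].
have hbound : forall o, g o < size a.
  move=> o.
  have hn : 0 < n.
    case: (posnP n) => // hn0.
    have hb0 : b = [::] by apply: is_comp_nil; rewrite -hn0.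
    by have := ltn_ord o; move: (val o); rewrite hb0.
  have hsa := comp_size_pos ha hn.
  rewrite /g; case: pickP => [p _|_] //=.
  rewrite (lnE _ (ltn_ord p)) /=; case: (l (Ordinal (ltn_ord p))) => x hx /=.
  by move: hx; rewrite size_compSet prednK.
pose f : {ffun 'I_(size b) -> 'I_(size a)} := [ffun o => Ordinal (hbound o)].
have hPhi : Phi n f = l.
  apply/ffunP => p; rewrite ffunE; apply: val_inj; rewrite /= inordK ?ltnS ?fN_le //.
  have hbp := bb_lt hb (ltn_ord p).
  rewrite -[bb p]/(val (Ordinal hbp)) fNE ffunE /= /g.
  case: pickP => [q /eqP hq|none] /=.
    rewrite (Blk2 hg (ltn_ord q) (ltn_ord p) hq).
    by rewrite (lnE _ (ltn_ord p)); congr (val (l _)); apply: val_inj.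
  by have := none p; rewrite eqxx.
exists f => //.
rewrite inE; apply/forallP => j; apply/eqP.
rewrite -(fiber_comp _ ha) -(sum_perm w0 (fun x => cnt sa x == j)).
transitivity (\sum_(0 <= q < n) (fN f (bb q) == j)).
  apply: eq_big_nat => q /andP[_ hq].
  by rewrite -(ln_Phi f hq) hPhi -e0 ln_lam.
rewrite (Fib hb) [RHS]big_mkcond /=; apply: eq_bigr => i _.
have -> : (f i == j) = (val (f i) == j) by [].
by case: (val (f i) == j); rewrite ?mul1n ?mul0n.
Qed.

Lemma good_card : #|[set l in Lam n sa sb | goodb sb l]| = eta a b.
Proof.
rewrite eta_card -(card_in_imset Good2); apply: eq_card => l.
have -> : (l \in [set l in Lam n sa sb | goodb sb l]) = (l \in Lam n sa sb) && goodb sb l by rewrite !inE.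
apply/andP/imsetP.
- by move=> [hl hg]; have [f hf <-] := Good3 hl hg; exists f.
- by move=> [f hf ->]; exact: Good1.
Qed.

End Good2.

Import GRing.Theory.
Local Open Scope ring_scope.

Section Alg.
Variable k : comPzRingType.
Variable n : nat.
Local Notation A := (alg k n).
Implicit Types f g h : A.

Lemma gaMulE f g x : gaMul f g x = \sum_(w : 'S_n) f (w^-1 * x)%g * g w.
Proof.
rewrite ffunE exchange_big /=; apply: eq_bigr => w _.
rewrite (bigD1 (w^-1 * x)%g) //= /pmul mulgA mulgV mul1g eqxx big1 ?addr0 // => u hu.
case: eqP => // e; case/negP: hu; apply/eqP; rewrite -e /pmul mulgA mulVg mul1g //.
Qed.

Lemma gaMulA f g h : gaMul f (gaMul g h) = gaMul (gaMul f g) h.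
Proof.
apply/ffunP => x; rewrite !gaMulE.
transitivity (\sum_(w : 'S_n) \sum_(w' : 'S_n) f (w^-1 * x)%g * (g (w'^-1 * w)%g * h w')).
  by apply: eq_bigr => w _; rewrite (gaMulE g h w) big_distrr.
rewrite exchange_big /=; apply: eq_bigr => w' _.
rewrite (gaMulE f g (w'^-1 * x)%g) big_distrl /=.
rewrite (reindex_inj (h := fun w2 => (w' * w2)%g)) /=; last exact: mulgI.
apply: eq_bigr => w2 _.
by rewrite mulgA mulVg mul1g invMg !mulgA mulrA.
Qed.

Lemma gaMul_sub f g h : gaMul (gaSub f g) h = gaSub (gaMul f h) (gaMul g h).
Proof.
apply/ffunP => x; rewrite gaMulE [in RHS]ffunE !gaMulE -sumrB; apply: eq_bigr => w _.
by rewrite ffunE mulrBl.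
Qed.

Lemma gaMul_scale c f h : gaMul (gaScale c f) h = gaScale c (gaMul f h).
Proof.
apply/ffunP => x; rewrite gaMulE [in RHS]ffunE !gaMulE big_distrr; apply: eq_bigr => w _.
by rewrite ffunE -mulrA.
Qed.

Lemma gaMul_add f g h : gaMul (gaAdd f g) h = gaAdd (gaMul f h) (gaMul g h).
Proof.
apply/ffunP => x; rewrite gaMulE [in RHS]ffunE !gaMulE -big_split; apply: eq_bigr => w _.
by rewrite ffunE mulrDl.
Qed.

Lemma gaMul_zero h : gaMul (gaZero k n) h = gaZero k n.
Proof.
apply/ffunP => x; rewrite gaMulE ffunE big1 // => w _; by rewrite ffunE mul0r.
Qed.

Lemma gaAddA f g h : gaAdd f (gaAdd g h) = gaAdd (gaAdd f g) h.
Proof. by apply/ffunP => x; rewrite !ffunE addrA. Qed.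

Lemma gaAdd0 f : gaAdd f (gaZero k n) = f.
Proof. by apply/ffunP => x; rewrite !ffunE addr0. Qed.

Lemma gaAdd0l f : gaAdd (gaZero k n) f = f.
Proof. by apply/ffunP => x; rewrite !ffunE add0r. Qed.

End Alg.

Lemma BB_coef (k : comPzRingType) n a b v :
  gaMul (Bcomp k n a) (Bcomp k n b) v = (\sum_(w : 'S_n) Wc (compSet a) (compSet b) v w)%:R.
Proof.
rewrite gaMulE natr_sum; apply: eq_bigr => w _.
by rewrite /Bcomp !BsetE -natrM mulnb andbC.
Qed.

Definition BP (k : comPzRingType) n (P : pred nat) : alg k n := [ffun w => (Xb P w)%:R].

Lemma foldr_cat_ga (k : comPzRingType) n (s1 s2 : seq (seq nat * alg k n)) :
  foldr (fun p acc => gaAdd (gaMul (Bcomp k n p.1) p.2) acc) (gaZero k n) (s1 ++ s2) =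
  gaAdd (foldr (fun p acc => gaAdd (gaMul (Bcomp k n p.1) p.2) acc) (gaZero k n) s1)
        (foldr (fun p acc => gaAdd (gaMul (Bcomp k n p.1) p.2) acc) (gaZero k n) s2).
Proof.
elim: s1 => [|p s1 IH] /=; first by rewrite gaAdd0l.
by rewrite IH gaAddA.
Qed.

Theorem theorem2p8 (k : comPzRingType) (n : nat) (a b : seq nat) :
  is_comp n a -> is_comp n b ->
  forall x : alg k n,
    inQ b (gaSub (gaMul (Bcomp k n a) (gaMul (Bcomp k n b) x))
                (gaScale (eta a b)%:R (gaMul (Bcomp k n b) x))).
Proof.
move=> ha hb x.
set sa := compSet a; set sb := compSet b.
set bad := [set l in Lam n sa sb | ~~ goodb sb l].
have key : gaSub (gaMul (Bcomp k n a) (Bcomp k n b)) (gaScale (eta a b)%:R (Bcomp k n b)) =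
           \big[@gaAdd k n/gaZero k n]_(l in bad) BP k n (DL sb l).
  apply/ffunP => v.
  rewrite (big_morph (fun f : alg k n => f v) (id1 := 0) (op1 := +%R)); last first.
  - by rewrite ffunE.
  - by move=> f g; rewrite ffunE.
  rewrite ffunE BB_coef ffunE main_count -(good_card ha hb) /Bcomp BsetE.
  rewrite natrD natrM addrC addKr natr_sum; apply: eq_bigr => l _.
  by rewrite ffunE.
have assoc : gaSub (gaMul (Bcomp k n a) (gaMul (Bcomp k n b) x))
                (gaScale (eta a b)%:R (gaMul (Bcomp k n b) x)) =
             gaMul (gaSub (gaMul (Bcomp k n a) (Bcomp k n b)) (gaScale (eta a b)%:R (Bcomp k n b))) x.
  by rewrite gaMul_sub gaMul_scale gaMulA.
rewrite assoc key.
rewrite (big_morph (fun f => gaMul f x) (fun f g => gaMul_add f g x) (gaMul_zero x)).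
apply: big_ind.
- by exists [::].
- move=> y z [s1 [h1 ->]] [s2 [h2 ->]]; exists (s1 ++ s2); split.
    by move=> p; rewrite mem_cat => /orP[/h1|/h2].
  by rewrite foldr_cat_ga.
move=> l; rewrite inE => /andP[_ hng].
move/forallPn: hng => [i]; rewrite negb_imply => /andP[/andP[h0 hnb] hne].
have hn : (0 < n)%N by apply: leq_ltn_trans (ltn_ord i).
have [g [hg hcut]] := comp_of_cuts (DL sb l) hn.
exists [:: (g, x)]; split.
  move=> p; rewrite inE => /eqP -> /=; split => //; split.
    apply: (refines_cuts hg hb) => y hy.
    have /andP[y0 yn] := compSet_range (proj1 (andP hb)) hy.
    move: yn; rewrite (eqP (proj2 (andP hb))) => yn.
    by rewrite hcut // /DL /Dk hy.
  move=> e; have : val i \in compSet g.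
    by rewrite hcut ?ltn_ord // /DL /Dk /= hne orbT.
  by rewrite e (negbTE hnb).
rewrite /= gaAdd0; congr gaMul.
apply/ffunP => w; rewrite /Bcomp BsetE ffunE.
by rewrite (Xb_eq (Q := DL sb l)).
Qed.
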